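(* For every integer $n\ge 0$ and every $r\in\{6,20,27,34,41,48\}$, $c_8(49n+r)\equiv 0\pmod 2$.
   Context: A partition of $n\ge 0$ is a finite multiset of positive integers summing to $n$; the empty partition is the partition of $0$. For $n\ge 0$, $c_8(n)$ denotes the number of partitions $\lambda$ of $n$ such that either (a) all parts of $\lambda$ are even and distinct, or (b) there is an integer $j\ge 1$ such that the set of odd parts of $\lambda$ is exactly $\{1,3,\dots,2j-1\}$, each odd part at most $j$ appears once or twice, each odd part greater than $j$ appears exactly once, the even parts of $\lambda$ are distinct, and no even part lies in the interval $(j,2j]$ (i.e. every even part greater than $j$ is at least $2j+2$). *)

(* Defs.v *)
From mathcomp Require Import all_boot.
Set Implicit Arguments. Unset Strict Implicit. Unset Printing Implicit Defensive.

(* A partition of n is represented by its multiplicity function: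
   m : {ffun 'I_n -> 'I_n.+1}, where m i is the multiplicity of the part i+1.
   (Every part of a partition of n is <= n and occurs at most n times, so this
   is a bijective encoding of partitions of n, i.e. of multisets of positive
   integers summing to n.) *)
Definition is_partition_of (n : nat) (m : {ffun 'I_n -> 'I_n.+1}) : bool :=
  \sum_(i < n) i.+1 * m i == n.

(* multiplicity of the part k (0 if k = 0 or k > n) *)
Definition mult (n : nat) (m : {ffun 'I_n -> 'I_n.+1}) (k : nat) : nat :=
  if k is k'.+1 then
    (if (insub k' : option 'I_n) is Some i then val (m i) else 0)
  else 0.

(* (a): all parts even and distinct.  Parts are <= n, so it suffices to
   test k in 1..2n. *)
Definition condA (n : nat) (f : nat -> nat) : bool :=
  [forall k : 'I_(2 * n + 1), (0 < k) ==>
     ((odd k ==> (f k == 0)) && (~~ odd k ==> (f k <= 1)))].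

(* (b): there is j >= 1 such that the odd parts are exactly 1,3,...,2j-1,
   odd parts <= j occur once or twice, odd parts > j occur exactly once,
   even parts are distinct, and no even part lies in (j, 2j].
   Since 2j-1 must be a part, j <= n, and all relevant k are <= 2n. *)
Definition condB (n : nat) (f : nat -> nat) : bool :=
  [exists j : 'I_n.+1, (0 < j) &&
    [forall k : 'I_(2 * n + 1), (0 < k) ==>
      [&& odd k ==> ((0 < f k) == (k <= 2 * j - 1)),
          (odd k && (k <= j)) ==> (f k <= 2),
          (odd k && (j < k) && (0 < f k)) ==> (f k == 1),
          ~~ odd k ==> (f k <= 1)
        & (~~ odd k && (j < k) && (k <= 2 * j)) ==> (f k == 0)]]].

Definition c8 (n : nat) : nat :=
  #|[set m : {ffun 'I_n -> 'I_n.+1} |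
       is_partition_of m && (condA n (mult m) || condB n (mult m))]|.

(* Main.v *)
Require Import Defs.
From mathcomp Require Import all_boot all_algebra.
From mathcomp Require Import zify.
From mathcomp.algebra_tactics Require Import ring.
Import GRing.Theory.
Set Implicit Arguments. Unset Strict Implicit. Unset Printing Implicit Defensive.


Lemma bin2_double m : (2 * 'C(m, 2) = m * m.-1)%N.
Proof.
elim: m => [|m IH] //. rewrite binS bin1 mulnDr IH. case: m {IH} => [|m] //=. nia.
Qed.

Lemma mod7_check (r u : nat) : (r < 7)%N -> (u < 7)%N -> (5 * (r * r) + 3 * (u * u)) %% 7 = 0 ->
  r = 0 /\ u = 0.
Proof.
by do 7?[case: r => [|r] //]; do 7?[case: u => [|u] //].
Qed.

Lemma NT N (hN : N %% 49 \in [:: 6; 20; 27; 34; 41; 48]) k l (b1 b2 : bool) :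
  (k * k + 'C(k + b1, 2) + (2 * (l * l) + 'C(l + b2, 2)) != N)%N.
Proof.
apply/eqP => E.
have E1 : (2 * 'C(k + b1, 2) = (k + b1) * (k + b1).-1)%N by exact: bin2_double.
have E2 : (2 * 'C(l + b2, 2) = (l + b2) * (l + b2).-1)%N by exact: bin2_double.
pose x := if b1 then 6 * k + 1 else if k == 0 then 1 else 6 * k - 1.
pose y := if b2 then 10 * l + 1 else if l == 0 then 1 else 10 * l - 1.
have Hx : (x * x = 24 * (k * k + 'C(k + b1, 2)) + 1)%N.
  rewrite /x; case: (b1) E1 => /= E1.
    rewrite /= addn1 in E1 *. nia.
  rewrite /= addn0 in E1 *. case: (k) E1 => [|k'] E1 //=. nia.
have Hy : (y * y = 40 * (2 * (l * l) + 'C(l + b2, 2)) + 1)%N.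
  rewrite /y; case: (b2) E2 => /= E2.
    rewrite /= addn1 in E2 *. nia.
  rewrite /= addn0 in E2 *. case: (l) E2 => [|l'] E2 //=. nia.
have Hxy : (5 * (x * x) + 3 * (y * y) = 120 * N + 8)%N by lia.
have hx := divn_eq x 7. have hy := divn_eq y 7.
have rx : (x %% 7 < 7)%N by rewrite ltn_mod. have ry : (y %% 7 < 7)%N by rewrite ltn_mod.
set a := x %/ 7 in hx. set r := x %% 7 in hx rx. set b := y %/ 7 in hy. set u := y %% 7 in hy ry.
have hN' := divn_eq N 49. set n := N %/ 49 in hN'. set r0 := N %% 49 in hN hN'.
have hr0 : r0 = 6 \/ r0 = 20 \/ r0 = 27 \/ r0 = 34 \/ r0 = 41 \/ r0 = 48.
  move: hN; rewrite !inE.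
  case/orP => [/eqP->|]; first by lia.
  case/orP => [/eqP->|]; first by lia.
  case/orP => [/eqP->|]; first by lia.
  case/orP => [/eqP->|]; first by lia.
  case/orP => [/eqP->|]; first by lia.
  move/eqP->; by lia.
have e : (5 * (r * r) + 3 * (u * u) + 7 * (5 * (7 * a * a + 2 * a * r) + 3 * (7 * b * b + 2 * b * u)) = 7 * (120 * 7 * n) + 120 * r0 + 8)%N.
  rewrite hx hy hN' in Hxy. lia.
have h7 : (5 * (r * r) + 3 * (u * u)) %% 7 = 0.
  move: e. set s := (5 * (r * r) + 3 * (u * u))%N. set t := (5 * (7 * a * a + 2 * a * r) + 3 * (7 * b * b + 2 * b * u))%N.
  lia.
have [r0' u0'] := @mod7_check r u rx ry h7.
rewrite hx hy hN' r0' u0' !addn0 in Hxy.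
move: Hxy. set t := (5 * (a * a) + 3 * (b * b))%N.
have -> : (5 * (a * 7 * (a * 7)) + 3 * (b * 7 * (b * 7)) = 49 * t)%N by rewrite /t; lia.
lia.
Qed.

Local Open Scope ring_scope.

Definition Pg (R : ringType) (x : R) (a len : nat) : R :=
  \prod_(0 <= j < len) (1 - x ^+ (a + j)).

Lemma PgS (R : ringType) (x : R) a len : Pg x a len.+1 = Pg x a len * (1 - x ^+ (a + len)).
Proof. by rewrite /Pg big_nat_recr. Qed.

Lemma Pg0 (R : ringType) (x : R) a : Pg x a 0 = 1.
Proof. by rewrite /Pg big_geq. Qed.

Definition A0g (R : ringType) (x : R) (k : nat) : R :=
  if k == 0%N then 1 else x ^+ 'C(k, 2) + x ^+ 'C(k.+1, 2).
Definition A1g (R : ringType) (x : R) (k : nat) : R := x ^+ (k * k) * A0g x k.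
Definition A2g (R : ringType) (x : R) (k : nat) : R := x ^+ (k * k) * A1g x k.

Definition sx (i d : nat) : nat := ('C(i.+1 - d, 2) + 'C(d - i, 2))%N.

Lemma Cs x : 'C(x.+1, 2) = ('C(x, 2) + x)%N.
Proof. by rewrite binS bin1. Qed.

Lemma sx1 i d : sx i.+1 d.+1 = sx i d.
Proof. by rewrite /sx !subSS. Qed.

Lemma sx2 i d : (sx i d.+1 + i = sx i d + d)%N.
Proof.
rewrite /sx subSS. case: (leqP d i) => h.
  rewrite (@bin_small (d.+1 - i)); last by lia.
  rewrite (@bin_small (d - i)); last by lia.
  have -> : (i.+1 - d = (i - d).+1)%N by lia.
  rewrite Cs. lia.
rewrite (@bin_small (i - d)); last by lia.
rewrite (@bin_small (i.+1 - d)); last by lia.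
have -> : (d.+1 - i = (d - i).+1)%N by lia.
rewrite Cs. lia.
Qed.

Section Alg.
Variable F : fieldType.
Variable q : F.
Hypothesis fac_neq0 : forall i, 1 - q ^+ i.+1 != 0.

Definition Q (n : nat) : F := Pg q 1 n.

Lemma QS n : Q n.+1 = Q n * (1 - q ^+ n.+1).
Proof. by rewrite /Q PgS add1n. Qed.

Lemma Q0 : Q 0 = 1. Proof. exact: Pg0. Qed.

Lemma Q_neq0 n : Q n != 0.
Proof.
elim: n => [|n IH]; first by rewrite Q0 oner_neq0.
by rewrite QS mulf_neq0 // fac_neq0.
Qed.

Lemma QD a len : Q (a + len) = Q a * Pg q a.+1 len.
Proof.
elim: len => [|len IH]; first by rewrite addn0 Pg0 mulr1.
by rewrite addnS QS IH PgS mulrA addSn.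
Qed.

Definition cv (N M : nat) : F :=
  \sum_(0 <= i < N.+1) q ^+ (i * (M + i)) / (Q (N - i) * Q i * Q (M + i)).

Lemma cv_rec N M : cv N.+1 M * (1 - q ^+ N.+1) = cv N M + q ^+ (M + N.+1) * cv N M.+1.
Proof.
rewrite /cv mulr_suml.
have split i : (i <= N.+1)%N -> 1 - q ^+ N.+1 = (1 - q ^+ (N.+1 - i)) + q ^+ (N.+1 - i) * (1 - q ^+ i).
  move=> hi. have -> : q ^+ N.+1 = q ^+ (N.+1 - i) * q ^+ i by rewrite -exprD subnK.
  ring.
rewrite (eq_big_nat _ _ (F2 := fun i => q ^+ (i * (M + i)) * (1 - q ^+ (N.+1 - i)) / (Q (N.+1 - i) * Q i * Q (M + i))
   + q ^+ (i * (M + i)) * (q ^+ (N.+1 - i) * (1 - q ^+ i)) / (Q (N.+1 - i) * Q i * Q (M + i)))); last first.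
  move=> i /andP[_ hi]. rewrite (split i) //. by rewrite mulrDr ![_ / _ * _]mulrAC.
rewrite big_split /=.
congr (_ + _).
  rewrite big_nat_recr //= subnn expr0 subrr mulr0 mul0r addr0.
  apply: eq_big_nat => i /andP[_ hi].
  rewrite subSn // QS.
  have := Q_neq0 (N - i); have := Q_neq0 i; have := Q_neq0 (M + i); have := fac_neq0 (N - i).
  move=> h1 h2 h3 h4. field. by rewrite h1 h2 h3 h4.
rewrite big_nat_recl // subn0 expr0 subrr !mulr0 mul0r add0r.
rewrite big_distrr /=.
apply: eq_big_nat => i /andP[_ hi].
rewrite QS subSS addnS.
rewrite [q ^+ _ * (q ^+ _ * _)]mulrA -exprD.
have -> : (i.+1 * (M + i).+1 + (N - i) = (M + N.+1) + i * (M.+1 + i))%N by lia.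
rewrite exprD -addSnnS.
have := Q_neq0 (N - i); have := Q_neq0 i; have := Q_neq0 (M + i).+1; have := fac_neq0 i.
move=> h1 h2 h3 h4.
field. by rewrite h1 h2 h3 h4.
Qed.

Lemma cvE N M : cv N M = 1 / (Q N * Q (N + M)).
Proof.
elim: N M => [|N IH] M.
  by rewrite /cv big_nat1 !subn0 !Q0 expr0 add0n addn0 !mul1r.
apply: (mulIf (fac_neq0 N)). rewrite cv_rec !IH.
rewrite addSn !addnS !QS (addnC M N).
have := Q_neq0 N; have := Q_neq0 (N + M); have := fac_neq0 N; have := fac_neq0 (N + M).
move=> h1 h2 h3 h4.
field. by rewrite h1 h2 h3 h4.
Qed.

Lemma bailey (A B : nat -> F)
  (hAB : forall j, B j = \sum_(0 <= k < j.+1) A k / (Q (j - k) * Q (j + k))) n :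
  \sum_(0 <= j < n.+1) q ^+ (j * j) * B j / Q (n - j) =
  \sum_(0 <= k < n.+1) q ^+ (k * k) * A k / (Q (n - k) * Q (n + k)).
Proof.
have E j : (j < n.+1)%N -> q ^+ (j * j) * B j / Q (n - j) =
  \sum_(0 <= k < n.+1) (if (k <= j)%N then q ^+ (j * j) * A k / (Q (n - j) * Q (j - k) * Q (j + k)) else 0).
  move=> hj. rewrite hAB (big_nat_widen _ _ _ _ _ hj) big_mkcond /= big_distrr big_distrl /=.
  apply: eq_big_nat => k _. rewrite ltnS. case: ifP => _; last by rewrite mulr0 mul0r.
  have := Q_neq0 (n - j); have := Q_neq0 (j - k); have := Q_neq0 (j + k).
  move=> h1 h2 h3. field. by rewrite h1 h2 h3.
rewrite (eq_big_nat _ _ (fun j hj => E j (andP hj).2)) exchange_big_nat /=.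
apply: eq_big_nat => k /andP[_ hk].
rewrite (@big_cat_nat _ _ _ k) //=; last exact: ltnW.
rewrite [X in X + _]big_nat_cond big1 ?add0r; last first.
  by move=> j /andP[/andP[_ hj] _]; rewrite leqNgt hj.
rewrite (eq_big_nat _ _ (F2 := fun j => q ^+ (j * j) * A k / (Q (n - j) * Q (j - k) * Q (j + k)))); last first.
  by move=> j /andP[hj _]; rewrite hj.
rewrite -{1}(add0n k) big_addn subSn; last by rewrite -ltnS.
have -> : q ^+ (k * k) * A k / (Q (n - k) * Q (n + k)) = q ^+ (k * k) * A k * cv (n - k) (k + k).
  rewrite cvE. have -> : (n - k + (k + k) = n + k)%N by lia.
  have := Q_neq0 (n - k); have := Q_neq0 (n + k). move=> h1 h2. field. by rewrite h1 h2.
rewrite /cv big_distrr /=. apply: eq_big_nat => i /andP[_ hi].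
have -> : ((i + k) * (i + k) = k * k + i * (k + k + i))%N by lia.
have -> : (n - (i + k) = n - k - i)%N by lia.
have -> : (i + k - k = i)%N by lia.
have -> : (i + k + k = k + k + i)%N by lia.
rewrite exprD.
have := Q_neq0 (n - k - i); have := Q_neq0 i; have := Q_neq0 (k + k + i). move=> h1 h2 h3.
field. by rewrite h1 h2 h3.
Qed.

Hypothesis two0 : (1 + 1 : F) = 0.

Definition HF (m d : nat) : F := \sum_(0 <= i < m.+1) q ^+ sx i d / (Q i * Q (m - i)).

Lemma HF_rec m d : HF m.+1 d.+1 * (1 - q ^+ m.+1) = (1 + q ^+ d) * HF m d.
Proof.
rewrite /HF mulr_suml.
have split i : (i <= m.+1)%N -> 1 - q ^+ m.+1 = (1 - q ^+ i) + q ^+ i * (1 - q ^+ (m.+1 - i)).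
  move=> hi. have -> : q ^+ m.+1 = q ^+ i * q ^+ (m.+1 - i) by rewrite -exprD subnKC.
  ring.
rewrite (eq_big_nat _ _ (F2 := fun i => q ^+ sx i d.+1 * (1 - q ^+ i) / (Q i * Q (m.+1 - i))
   + q ^+ sx i d.+1 * (q ^+ i * (1 - q ^+ (m.+1 - i))) / (Q i * Q (m.+1 - i)))); last first.
  move=> i /andP[_ hi]. rewrite (split i) //. by rewrite mulrDr ![_ / _ * _]mulrAC.
rewrite big_split /= mulrDl mul1r.
congr (_ + _).
  rewrite big_nat_recl // expr0 subrr mulr0 mul0r add0r.
  apply: eq_big_nat => i /andP[_ hi].
  rewrite sx1 QS subSS.
  have := Q_neq0 (m - i); have := Q_neq0 i; have := fac_neq0 i.
  move=> h1 h2 h3. field. by rewrite h1 h2 h3.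
rewrite big_nat_recr //= subnn expr0 subrr !mulr0 mul0r addr0.
rewrite big_distrr /=.
apply: eq_big_nat => i /andP[_ hi].
rewrite subSn // QS.
rewrite [q ^+ _ * (q ^+ _ * _)]mulrA -exprD sx2 exprD.
have := Q_neq0 (m - i); have := Q_neq0 i; have := fac_neq0 (m - i).
move=> h1 h2 h3. field. by rewrite h1 h2 h3.
Qed.

Lemma HF0 m d : (0 < d <= m)%N -> HF m d = 0.
Proof.
elim: m d => [|m IH] d hd; first by lia.
case: d hd => [|d] hd; first by lia.
apply: (mulIf (fac_neq0 m)). rewrite mul0r HF_rec.
case: d hd => [|d] hd; first by rewrite expr0 two0 mul0r.
by rewrite IH ?mulr0 //; lia.
Qed.

Definition A0 := A0g q.
Definition A1 := A1g q.
Definition A2 := A2g q.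

Lemma sum_shift (G : nat -> F) a b : \sum_(a <= i < b) G i = \sum_(0 <= i < b - a) G (i + a).
Proof. by rewrite -{1}[a]add0n big_addn. Qed.

Lemma unit_sum n : (0 < n)%N ->
  \sum_(0 <= k < n.+1) A0 k / (Q (n - k) * Q (n + k)) = 0.
Proof.
move=> hn.
transitivity (HF (n + n) n.+1); last by rewrite HF0 //; lia.
have hle : (n <= (n + n).+1)%N by lia.
rewrite /HF [in RHS](@big_cat_nat _ _ _ n) //.
rewrite [X in _ = _ + X]big_nat_recl ?leq_addr //.
rewrite [X in _ = _ + (_ + X)]sum_shift.
rewrite [in LHS]big_nat_recl //.
have -> : A0 0 = 1 by [].
have -> : sx n n.+1 = 0%N by rewrite /sx subnn subSnn.
rewrite expr0 subn0 addn0 addnK addrCA. congr (_ + _).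
rewrite [X in _ = X + _]big_nat_rev -big_split.
apply: eq_big_nat => k /andP[_ hk].
rewrite add0n.
have -> : sx (n - k.+1) n.+1 = 'C(k.+2, 2).
  rewrite /sx. have -> : ((n - k.+1).+1 - n.+1 = 0)%N by lia.
  have -> : (n.+1 - (n - k.+1) = k.+2)%N by lia. by [].
have -> : sx (k + n).+1 n.+1 = 'C(k.+1, 2).
  rewrite /sx. have -> : ((k + n).+2 - n.+1 = k.+1)%N by lia.
  have -> : (n.+1 - (k + n).+1 = 0)%N by lia. by rewrite addn0.
have -> : (n + n - (n - k.+1) = n + k.+1)%N by lia.
have -> : (n + n - (k + n).+1 = n - k.+1)%N by lia.
have -> : ((k + n).+1 = n + k.+1)%N by lia.
rewrite /A0 /A0g /=.
have := Q_neq0 (n - k.+1); have := Q_neq0 (n + k.+1). move=> h1 h2.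
field. by rewrite h1 h2.
Qed.

Lemma unit_pair j : (j == 0%N)%:R = \sum_(0 <= k < j.+1) A0 k / (Q (j - k) * Q (j + k)).
Proof.
case: j => [|j]; first by rewrite big_nat1 Q0 mulr1 divr1.
by rewrite unit_sum.
Qed.

Lemma pair1 n : 1 / Q n = \sum_(0 <= k < n.+1) A1 k / (Q (n - k) * Q (n + k)).
Proof.
have := bailey unit_pair n. rewrite big_nat_recl // eqxx mulr1 expr0 mul1r subn0.
rewrite big1 ?addr0; last by move=> i _; rewrite mulr0 mul0r.
by rewrite div1r => ->.
Qed.

Lemma pair2 n : \sum_(0 <= j < n.+1) q ^+ (j * j) / (Q j * Q (n - j)) =
  \sum_(0 <= k < n.+1) A2 k / (Q (n - k) * Q (n + k)).
Proof.
have := bailey (B := fun j => 1 / Q j) pair1 n. move <-.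
apply: eq_big_nat => j _. by rewrite mul1r invfM mulrA.
Qed.

Lemma QDn a b c : (a + b = c)%N -> Q c = Q a * Pg q a.+1 b.
Proof. by move<-; rewrite QD. Qed.

Lemma EP n : Pg q 1 (n + n) =
  \sum_(0 <= k < n.+1) A1 k * (Pg q (n - k).+1 k * Pg q (n + k).+1 (n - k)).
Proof.
transitivity (Q n * Q (n + n) * (1 / Q n)).
  have := Q_neq0 n. move=> h. rewrite /Q. field. by rewrite h.
rewrite pair1 big_distrr /=. apply: eq_big_nat => k /andP[_ hk].
rewrite (@QDn (n - k) k n); last by lia.
rewrite (@QDn (n + k) (n - k) (n + n)); last by lia.
have := Q_neq0 (n - k); have := Q_neq0 (n + k). move=> h1 h2.
field. by rewrite h1 h2.
Qed.

Lemma RP n : \sum_(0 <= j < n.+1) q ^+ (j * j) * (Pg q j.+1 (n - j) * Pg q (n - j).+1 (n + j)) =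
  \sum_(0 <= k < n.+1) A2 k * (Pg q (n - k).+1 k * Pg q (n + k).+1 (n - k)).
Proof.
transitivity (Q n * Q (n + n) * \sum_(0 <= j < n.+1) q ^+ (j * j) / (Q j * Q (n - j))).
  rewrite big_distrr /=. apply: eq_big_nat => j /andP[_ hj].
  rewrite (@QDn j (n - j) n); last by lia.
  rewrite (@QDn (n - j) (n + j) (n + n)); last by lia.
  have := Q_neq0 (n - j); have := Q_neq0 j. move=> h1 h2.
  field. by rewrite h1 h2.
rewrite pair2 big_distrr /=. apply: eq_big_nat => k /andP[_ hk].
rewrite (@QDn (n - k) k n); last by lia.
rewrite (@QDn (n + k) (n - k) (n + n)); last by lia.
have := Q_neq0 (n - k); have := Q_neq0 (n + k). move=> h1 h2.
field. by rewrite h1 h2.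
Qed.
End Alg.


Definition K := {fraction {poly 'F_2}}.
Lemma c2 : (2%:R : 'F_2) = 0. Proof. exact: (@pchar_Fp_0 2). Qed.
Lemma c2K : 2 \in [pchar K].
Proof. rewrite inE /=. apply/eqP. rewrite -(rmorph_nat (@tofrac _)) -(rmorph_nat (@polyC _)) /=. by rewrite c2 rmorph0. Qed.
Lemma two0K : (1 + 1 : K) = 0. Proof. by rewrite (addrr_pchar2 c2K). Qed.

Definition qK : K := tofrac 'X.
Definition X2 : {poly 'F_2} := 'X.

Lemma fac_neq0K i : 1 - qK ^+ i.+1 != 0.
Proof.
have -> : 1 - qK ^+ i.+1 = tofrac (1 - X2 ^+ i.+1) by rewrite tofracB tofrac1 tofracXn.
rewrite tofrac_eq0 subr_eq0.
apply/eqP => /(congr1 (fun p : {poly 'F_2} => p`_i.+1)).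
by rewrite coef1 coefXn eqxx /= => /eqP; rewrite eq_sym oner_eq0.
Qed.

Lemma Pg_frac a len : tofrac (Pg X2 a len) = Pg qK a len.
Proof. by rewrite /Pg rmorph_prod; apply: eq_bigr => i _; rewrite rmorphB rmorph1 rmorphXn. Qed.

Lemma A0_frac k : tofrac (A0g X2 k) = A0g qK k.
Proof. by rewrite /A0g; case: (k == 0%N); rewrite ?rmorph1 // rmorphD !rmorphXn. Qed.
Lemma A1_frac k : tofrac (A1g X2 k) = A1g qK k.
Proof. by rewrite /A1g rmorphM rmorphXn; congr (_ * _); exact: A0_frac. Qed.
Lemma A2_frac k : tofrac (A2g X2 k) = A2g qK k.
Proof. by rewrite /A2g rmorphM rmorphXn; congr (_ * _); exact: A1_frac. Qed.

Lemma tofrac_inj' (p r : {poly 'F_2}) : tofrac p = tofrac r -> p = r.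
Proof. by move=> h; apply/eqP; rewrite -tofrac_eq h. Qed.

Lemma tofrac_sum (F : nat -> {poly 'F_2}) m : tofrac (\sum_(0 <= k < m) F k) = \sum_(0 <= k < m) tofrac (F k).
Proof. elim/big_rec2: _ => [|i x y _ <-]; [exact: tofrac0 | exact: tofracD]. Qed.

Lemma EPp n : Pg X2 1 (n + n) =
  \sum_(0 <= k < n.+1) A1g X2 k * (Pg X2 (n - k).+1 k * Pg X2 (n + k).+1 (n - k)).
Proof.
apply: tofrac_inj'. rewrite Pg_frac tofrac_sum (EP fac_neq0K two0K).
by apply: eq_bigr => k _; rewrite !tofracM tofracXn A0_frac !Pg_frac.
Qed.

Lemma RPp n : \sum_(0 <= j < n.+1) X2 ^+ (j * j) * (Pg X2 j.+1 (n - j) * Pg X2 (n - j).+1 (n + j)) =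
  \sum_(0 <= k < n.+1) A2g X2 k * (Pg X2 (n - k).+1 k * Pg X2 (n + k).+1 (n - k)).
Proof.
apply: tofrac_inj'. rewrite !tofrac_sum.
transitivity (\sum_(0 <= j < n.+1) qK ^+ (j * j) * (Pg qK j.+1 (n - j) * Pg qK (n - j).+1 (n + j))).
  by apply: eq_bigr => j _; rewrite !tofracM tofracXn !Pg_frac.
rewrite (RP fac_neq0K two0K n).
by apply: eq_bigr => k _; rewrite !tofracM !tofracXn A0_frac !Pg_frac.
Qed.


Lemma PgD (R : ringType) (x : R) a l1 l2 : Pg x a (l1 + l2) = Pg x a l1 * Pg x (a + l1) l2.
Proof.
elim: l2 => [|l2 IH]; first by rewrite addn0 Pg0 mulr1.
by rewrite addnS !PgS IH mulrA addnA.
Qed.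

Lemma id1 (R : comRingType) (P Y : R) : P * (1 - Y) - 1 = (P - 1) * (1 - Y) + - Y.
Proof. ring. Qed.
Lemma id2 (R : comRingType) (P1 P2 : R) : P1 * P2 - 1 = (P1 - 1) * P2 + (P2 - 1).
Proof. ring. Qed.
Lemma id3 (R : comRingType) (P A B S : R) : P * S - A * B = P * (S - B) + (P - A) * B.
Proof. ring. Qed.

Lemma id4 (R : comRingType) (a b c : R) : - b + (a - c) = (a - b) - c.
Proof. ring. Qed.

Definition low (m : nat) (p : {poly 'F_2}) := forall i, (i < m)%N -> p`_i = 0.

Lemma low_le m m' p : (m' <= m)%N -> low m p -> low m' p.
Proof. move=> h hp i hi; apply: hp; exact: leq_trans hi h. Qed.
Lemma low_add m p s : low m p -> low m s -> low m (p + s).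
Proof. by move=> hp hs i hi; rewrite coefD hp ?hs ?addr0. Qed.
Lemma low_opp m p : low m p -> low m (- p).
Proof. by move=> hp i hi; rewrite coefN hp ?oppr0. Qed.
Lemma low_sum m (F : nat -> {poly 'F_2}) a b : (forall i, (a <= i < b)%N -> low m (F i)) ->
  low m (\sum_(a <= i < b) F i).
Proof.
move=> h j hj. rewrite coef_sum big_nat_cond big1 // => i /andP[hi _]. exact: h.
Qed.
Lemma low_mul a b p s : low a p -> low b s -> low (a + b) (p * s).
Proof.
move=> hp hs i hi. rewrite coefM big1 // => j _.
case: (ltnP j a) => hj; first by rewrite hp ?mul0r.
rewrite hs ?mulr0 //. have := ltn_ord j. lia.
Qed.
Lemma low0 p : low 0 p. Proof. by []. Qed.
Lemma low_mulr a p s : low a p -> low a (p * s).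
Proof. move=> h; rewrite -[a]addn0; exact: low_mul. Qed.
Lemma low_mull a p s : low a s -> low a (p * s).
Proof. move=> h; rewrite -[a]add0n; exact: low_mul. Qed.
Lemma low_X k : low k (X2 ^+ k).
Proof. move=> i hi. rewrite coefXn. by case: eqP => // e; move: hi; rewrite e ltnn. Qed.
Lemma lowP m p s : low m.+1 (p - s) -> p`_m = s`_m.
Proof. move=> h. apply/eqP. rewrite -subr_eq0 -coefB. by rewrite h. Qed.

Lemma Pg_low a len : low a (Pg X2 a len - 1).
Proof.
elim: len => [|len IH]; first by rewrite Pg0 subrr => i _; rewrite coef0.
rewrite PgS id1. apply: low_add; first exact: low_mulr.
apply: low_opp. apply: (@low_le (a + len)); [exact: leq_addr | exact: low_X].
Qed.

Lemma PP_low m p s : low m (p - 1) -> low m (s - 1) -> low m (p * s - 1).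
Proof. move=> h1 h2. rewrite id2. apply: low_add => //. exact: low_mulr. Qed.

Lemma Et n : low n.+1 (Pg X2 1 n - \sum_(0 <= k < n.+1) A1g X2 k).
Proof.
have -> : Pg X2 1 n - \sum_(0 <= k < n.+1) A1g X2 k =
   - (Pg X2 1 n * (Pg X2 n.+1 n - 1)) + (Pg X2 1 (n + n) - \sum_(0 <= k < n.+1) A1g X2 k).
  rewrite PgD add1n mulrBr mulr1 opprB addrA subrK. by [].
apply: low_add; first by apply/low_opp/low_mull/Pg_low.
rewrite EPp -sumrB. apply: low_sum => k /andP[_ hk].
rewrite -{2}[A1g X2 k]mulr1 -mulrBr /A1g.
apply: (@low_le (k * k + (n - k).+1)); first by nia.
apply: low_mul; first exact/low_mulr/low_X.
apply: PP_low; first exact: Pg_low.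
apply: (@low_le (n + k).+1); [lia | exact: Pg_low].
Qed.

Lemma Rt n : low n.+1 (\sum_(0 <= j < n.+1) X2 ^+ (j * j) * Pg X2 j.+1 (n - j)
                         - \sum_(0 <= k < n.+1) A2g X2 k).
Proof.
have -> : \sum_(0 <= j < n.+1) X2 ^+ (j * j) * Pg X2 j.+1 (n - j) - \sum_(0 <= k < n.+1) A2g X2 k =
  - (\sum_(0 <= j < n.+1) X2 ^+ (j * j) * (Pg X2 j.+1 (n - j) * (Pg X2 (n - j).+1 (n + j) - 1)))
  + (\sum_(0 <= j < n.+1) X2 ^+ (j * j) * (Pg X2 j.+1 (n - j) * Pg X2 (n - j).+1 (n + j))
     - \sum_(0 <= k < n.+1) A2g X2 k).
  rewrite id4. congr (_ - _). rewrite -sumrB. apply: eq_bigr => j _.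
  by rewrite mulrBr mulrBr mulr1 opprB addrC subrK.
apply: low_add.
  apply/low_opp/low_sum => j /andP[_ hj].
  apply: (@low_le (j * j + (n - j).+1)); first by nia.
  rewrite mulrA. apply: low_mul; first exact/low_mulr/low_X.
  exact: Pg_low.
rewrite RPp -sumrB. apply: low_sum => k /andP[_ hk].
rewrite -{2}[A2g X2 k]mulr1 -mulrBr /A2g.
apply: (@low_le (k * k + (n - k).+1)); first by nia.
apply: low_mul; first exact/low_mulr/low_X.
apply: PP_low; first exact: Pg_low.
apply: (@low_le (n + k).+1); [lia | exact: Pg_low].
Qed.

Lemma coef_main n :
  (Pg X2 1 n * \sum_(0 <= j < n.+1) X2 ^+ (j * j) * Pg X2 j.+1 (n - j))`_n =
  ((\sum_(0 <= k < n.+1) A1g X2 k) * (\sum_(0 <= k < n.+1) A2g X2 k))`_n.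
Proof.
apply: lowP. rewrite id3. apply: low_add; first exact/low_mull/Rt.
exact/low_mulr/Et.
Qed.


Definition e1 (k : nat) (b : bool) : nat := (k * k + 'C(k + b, 2))%N.
Definition e2 (l : nat) (b : bool) : nat := (2 * (l * l) + 'C(l + b, 2))%N.

Lemma A1_form k : A1g X2 k = if k == 0%N then X2 ^+ (e1 k false) else X2 ^+ (e1 k false) + X2 ^+ (e1 k true).
Proof.
rewrite /A1g /A0g /e1; case: eqP => [->|_] /=; first by rewrite mulr1.
by rewrite mulrDr -!exprD addn0 addn1.
Qed.

Lemma A2_form l : A2g X2 l = if l == 0%N then X2 ^+ (e2 l false) else X2 ^+ (e2 l false) + X2 ^+ (e2 l true).
Proof.
rewrite /A2g /A1g /A0g /e2; case: eqP => [->|_] /=; first by rewrite !mulr1.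
by rewrite !mulrDr -!exprD addn0 addn1 !addnA addnn -mul2n.
Qed.

Lemma coef_A N (hN : (N %% 49)%N \in [:: 6; 20; 27; 34; 41; 48]) k l : (A1g X2 k * A2g X2 l)`_N = 0.
Proof.
have m a b : (X2 ^+ a * X2 ^+ b)`_N = (N == a + b)%:R by rewrite -exprD coefXn.
have H b1 b2 : (N == e1 k b1 + e2 l b2) = false by rewrite eq_sym; apply/negbTE/NT.
rewrite A1_form A2_form.
by case: eqP; case: eqP => _ _; rewrite ?mulrDl ?mulrDr ?coefD !m ?H ?addr0.
Qed.

Lemma coef_AA N (hN : (N %% 49)%N \in [:: 6; 20; 27; 34; 41; 48]) :
  ((\sum_(0 <= k < N.+1) A1g X2 k) * (\sum_(0 <= k < N.+1) A2g X2 k))`_N = 0.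
Proof.
rewrite mulr_suml coef_sum big1 // => k _.
by rewrite mulr_sumr coef_sum big1 // => l _; rewrite coef_A.
Qed.

Lemma main_alg N (hN : (N %% 49)%N \in [:: 6; 20; 27; 34; 41; 48]) :
  (Pg X2 1 N * \sum_(0 <= j < N.+1) X2 ^+ (j * j) * Pg X2 j.+1 (N - j))`_N = 0.
Proof. by rewrite coef_main coef_AA. Qed.


Lemma card_sumF2 (T : finType) (C : pred T) : (#|[set x | C x]|%:R : 'F_2) = \sum_x (C x)%:R.
Proof.
rewrite -sum1_card natr_sum big_mkcond /=. apply: eq_bigr => x _. by rewrite inE; case: (C x).
Qed.

Lemma mult_S n (m : {ffun 'I_n -> 'I_n.+1}) k (h : (k < n)%N) : mult m k.+1 = m (Ordinal h).
Proof. by rewrite /mult insubT. Qed.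

Lemma mult_ge n (m : {ffun 'I_n -> 'I_n.+1}) k : (n <= k)%N -> mult m k.+1 = 0%N.
Proof. by move=> h; rewrite /mult insubF // ltnNge h. Qed.

Definition FP (n : nat) (P : nat -> nat -> bool) (k : nat) : {poly 'F_2} :=
  if (k <= n)%N then \sum_(0 <= s < n.+1) (if P k s then X2 ^+ (k * s) else 0)
  else (P k 0%N)%:R.

Lemma forall_split n (m : {ffun 'I_n -> 'I_n.+1}) (P : nat -> nat -> bool) :
  [forall k : 'I_(2 * n + 1), (0 < k)%N ==> P k (mult m k)] =
  [forall i : 'I_n, P i.+1 (m i)] && all (fun k => P k.+1 0%N) (index_iota n (2 * n)).
Proof.
apply/idP/idP.
  move/forallP => h. apply/andP; split.
    apply/forallP => i. have hi : (i.+1 < 2 * n + 1)%N by have := ltn_ord i; lia.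
    have := h (Ordinal hi). rewrite [nat_of_ord (Ordinal hi)]/= (mult_S m (ltn_ord i)) /=.
    by have -> : Ordinal (ltn_ord i) = i by apply: val_inj.
  apply/allP => k. rewrite mem_index_iota => /andP[h1 h2].
  have hk : (k.+1 < 2 * n + 1)%N by lia.
  by have := h (Ordinal hk); rewrite [nat_of_ord (Ordinal hk)]/= mult_ge.
case/andP => /forallP h1 /allP h2. apply/forallP => -[k hk].
case: k hk => [|k] hk //.
change ((0 < k.+1)%N ==> P k.+1 (mult m k.+1)). apply/implyP => _.
case: (ltnP k n) => hkn.
  by rewrite (mult_S m hkn); exact: (h1 (Ordinal hkn)).
rewrite mult_ge //. apply: h2. rewrite mem_index_iota. lia.
Qed.

Lemma prod_ite (I : finType) (b : I -> bool) (e : I -> nat) :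
  \prod_i (if b i then X2 ^+ (e i) else 0) = if [forall i, b i] then X2 ^+ (\sum_i e i) else 0.
Proof.
case: (boolP [forall i, b i]) => H.
  rewrite -prodrXr. apply: eq_bigr => i _. by rewrite (forallP H).
move/forallPn: H => [i hi]. by rewrite (bigD1 i) //= (negbTE hi) mul0r.
Qed.

Lemma prod_bool (r : seq nat) (b : nat -> bool) :
  \prod_(k <- r) ((b k)%:R : {poly 'F_2}) = (all b r)%:R.
Proof.
elim: r => [|x r IH]; first by rewrite big_nil.
by rewrite big_cons IH /=; case: (b x); rewrite ?mul1r ?mul0r.
Qed.

Lemma GC n (P : nat -> nat -> bool) :
  \sum_(m : {ffun 'I_n -> 'I_n.+1})
     ((is_partition_of m && [forall k : 'I_(2 * n + 1), (0 < k)%N ==> P k (mult m k)])%:R : 'F_2)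
  = (\prod_(0 <= k < 2 * n) FP n P k.+1)`_n.
Proof.
have hn : (n <= 2 * n)%N by lia.
rewrite (@big_cat_nat _ _ _ n) //.
have E1 : \prod_(0 <= k < n) FP n P k.+1 =
   \prod_(i < n) \sum_(s < n.+1) (if P i.+1 s then X2 ^+ (i.+1 * s) else 0).
  rewrite big_mkord. apply: eq_bigr => i _. by rewrite /FP ltn_ord big_mkord.
have E2 : \prod_(n <= k < 2 * n) FP n P k.+1 = (all (fun k => P k.+1 0%N) (index_iota n (2 * n)))%:R.
  rewrite -prod_bool. apply: eq_big_nat => k /andP[h _]. by rewrite /FP ltnNge h.
rewrite E1 E2 bigA_distr_bigA /= mulr_suml coef_sum. apply: eq_bigr => m _.
rewrite prod_ite forall_split /is_partition_of.
case: [forall i, _]; case: all; rewrite ?mulr1 ?mulr0 ?mul0r ?coef0 ?coefXn ?andbF ?andbT //=.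
by rewrite eq_sym.
Qed.

Definition PB (j : nat) (k s : nat) : bool :=
 [&& odd k ==> ((0 < s) == (k <= 2 * j - 1)),
     (odd k && (k <= j)) ==> (s <= 2),
     (odd k && (j < k) && (0 < s)) ==> (s == 1),
     ~~ odd k ==> (s <= 1)
   & (~~ odd k && (j < k) && (k <= 2 * j)) ==> (s == 0)]%N.

Definition bodyB (n j : nat) (f : nat -> nat) : bool :=
  [forall k : 'I_(2 * n + 1), (0 < k)%N ==> PB j k (f k)].

Lemma condA_PB n f : condA n f = bodyB n 0 f.
Proof.
apply: eq_forallb => -[[|k] hk] //=. rewrite /PB /=.
by case: (odd k); case: (f k.+1) => [|[|s]].
Qed.

Lemma condB_PB n f : condB n f = [exists j : 'I_n.+1, (0 < j)%N && bodyB n j f].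
Proof. by []. Qed.

Lemma bodyB_uniq n f (j j' : nat) : (j <= n)%N -> (j' <= n)%N -> bodyB n j f -> bodyB n j' f -> j = j'.
Proof.
wlog: j j' / (j <= j')%N.
  move=> H hj hj' h h'. case: (leqP j j') => c; first exact: H.
  symmetry. apply: H => //. exact: ltnW.
move=> hle hj hj' h h'. apply/eqP. rewrite eqn_leq hle /=. apply/negP => hlt.
have hk : (2 * j + 1 < 2 * n + 1)%N by lia.
move/forallP/(_ (Ordinal hk)): h. move/forallP/(_ (Ordinal hk)): h'.
rewrite /= /PB. have -> : odd (2 * j + 1) by rewrite addn1 /= oddM.
rewrite addn1 /=. have -> : (2 * j < 2 * j' - 1)%N by lia. have -> : (2 * j < 2 * j - 1)%N = false by lia.
by case/and4P => /eqP -> _ _ _ /and4P [] /eqP.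
Qed.

Lemma exists_ind n f : ((condA n f || condB n f)%:R : 'F_2) = \sum_(j < n.+1) ((bodyB n j f)%:R : 'F_2).
Proof.
have E : (condA n f || condB n f) = [exists j : 'I_n.+1, bodyB n j f].
  rewrite condA_PB condB_PB. apply/idP/idP.
    case/orP => [h|/existsP[j /andP[_ h]]]; apply/existsP; [by exists ord0 | by exists j].
  case/existsP => j h. case: (posnP j) => hj.
    by rewrite hj in h; rewrite h.
  by apply/orP; right; apply/existsP; exists j; rewrite hj h.
rewrite E. case: (pickP (fun j : 'I_n.+1 => bodyB n j f)) => [j0 h0|hnone].
  have -> : [exists j : 'I_n.+1, bodyB n j f] by apply/existsP; exists j0.
  rewrite (bigD1 j0) //= h0 big1 ?addr0 //. move=> j hj.
  case: (boolP (bodyB n j f)) => // hb. exfalso. move/eqP: hj; apply; apply: val_inj.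
  by apply: (bodyB_uniq _ _ hb h0); rewrite -ltnS ltn_ord.
have -> : [exists j : 'I_n.+1, bodyB n j f] = false.
  by apply/negbTE/existsP => -[j hj]; rewrite hnone in hj.
by rewrite big1 // => j _; rewrite hnone.
Qed.

Lemma c8_sum n : ((c8 n)%:R : 'F_2) = \sum_(j < n.+1) (\prod_(0 <= k < 2 * n) FP n (PB j) k.+1)`_n.
Proof.
rewrite /c8 card_sumF2.
transitivity (\sum_(m : {ffun 'I_n -> 'I_n.+1}) \sum_(j < n.+1) (((is_partition_of m && bodyB n j (mult m)))%:R : 'F_2)).
  apply: eq_bigr => m _.
  case: (is_partition_of m) => /=; first exact: exists_ind.
  by rewrite big1.
rewrite exchange_big /=. apply: eq_bigr => j _. exact: GC.
Qed.


Lemma two_poly : (2%:R : {poly 'F_2}) = 0.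
Proof. by rewrite -(rmorph_nat (@polyC _)) /= c2 rmorph0. Qed.

Lemma PB_big j k s : (0 < k)%N -> (2 < s)%N -> PB j k s = false.
Proof.
move=> hk hs. rewrite /PB.
have -> : (s <= 2)%N = false by lia. have -> : (s <= 1)%N = false by lia.
have -> : (s == 1)%N = false by lia. have -> : (0 < s)%N = true by lia.
case: (odd k) => /=; last by [].
by case: (leqP k j) => h /=; rewrite ?andbF //= h.
Qed.

Lemma FP_small n j k : (2 <= n)%N -> (k <= n)%N -> (0 < k)%N ->
  FP n (PB j) k = (PB j k 0)%:R + ((if PB j k 1 then X2 ^+ k else 0) + (if PB j k 2 then X2 ^+ (k * 2) else 0)).
Proof.
move=> hn hkn hk. rewrite /FP hkn.
case: n hn hkn => [|[|n]] // _ _.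
rewrite big_nat_recl // big_nat_recl // big_nat_recl // big1_seq ?addr0; last first.
  by move=> s _; rewrite PB_big.
by rewrite muln0 expr0 muln1; case: (PB j k 0).
Qed.

Definition gA (j k : nat) : {poly 'F_2} := if odd k && (k <= 2 * j - 1)%N then X2 ^+ k else 1.
Definition gB (j k : nat) : {poly 'F_2} := if (k <= j)%N then 1 - X2 ^+ k else 1.
Definition gC (j k : nat) : {poly 'F_2} := if ~~ odd k && (2 * j < k)%N then 1 - X2 ^+ k else 1.
Definition g (j k : nat) : {poly 'F_2} := gA j k * gB j k * gC j k.

Lemma low0' m : low m 0. Proof. by move=> i _; rewrite coef0. Qed.

Lemma low_2 m (p r : {poly 'F_2}) : p = 2%:R * r -> low m p.
Proof. by move=> ->; rewrite two_poly mul0r; exact: low0'. Qed.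

Lemma FP_g n j k : (2 <= n)%N -> (0 < k)%N -> low n.+1 (FP n (PB j) k - g j k).
Proof.
move=> hn hk.
have hpar := odd_double_half k. rewrite -mul2n in hpar.
case: (leqP k n) => hkn.
  rewrite FP_small // /g /gA /gB /gC /PB.
  set x := X2 ^+ k. have xx : X2 ^+ (k * 2) = x * x by rewrite /x -exprD addnn muln2.
  rewrite xx.
  case ok : (odd k) hpar => hpar /=.
    case: (leqP k j) => h1.
      have -> : (k <= 2 * j - 1)%N = true by lia.
      rewrite /=. apply: (low_2 (r := x * x)). ring.
    case: (leqP k (2 * j - 1)) => h2 /=.
      apply: (low_2 (r := 0)). ring.
    apply: (low_2 (r := 0)). ring.
  case: (leqP k j) => h1.
    have -> : (2 * j < k)%N = false by lia.
    rewrite /=. apply: (low_2 (r := x)). ring.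
  case: (leqP k (2 * j)) => h2 /=.
    apply: (low_2 (r := 0)). ring.
  apply: (low_2 (r := x)). ring.
have lX : low n.+1 (X2 ^+ k) by apply: (@low_le k); [exact: hkn | exact: low_X].
have hF : FP n (PB j) k = (PB j k 0)%:R by rewrite /FP leqNgt hkn.
rewrite hF /g /gA.
case ok : (odd k) => /=.
  case: (leqP k (2 * j - 1)) => h2 /=.
    rewrite /PB ok h2 /= add0r. apply/low_opp/low_mulr/low_mulr. exact: lX.
  have -> : PB j k 0 = true.
    rewrite /PB ok. have -> : (k <= 2 * j - 1)%N = false by lia.
    have -> : (k <= j)%N = false by lia. by rewrite /= andbF.
  rewrite /gB /gC ok /=. have -> : (k <= j)%N = false by lia.
  rewrite mul1r mulr1 subrr. exact: low0'.
have -> : PB j k 0 = true by rewrite /PB ok /=; case: (_ && _).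
rewrite mul1r -opprB. apply: low_opp. apply: PP_low.
  rewrite /gB; case: ifP => _; last by rewrite subrr; exact: low0'.
  by rewrite addrAC subrr add0r; apply: low_opp.
rewrite /gC; case: ifP => _; last by rewrite subrr; exact: low0'.
by rewrite addrAC subrr add0r; apply: low_opp.
Qed.

Lemma id5 (R : comRingType) (a b c d : R) : a * b - c * d = (a - c) * b + c * (b - d).
Proof. ring. Qed.

Lemma low_prod m (f h : nat -> {poly 'F_2}) N :
  (forall k, (k < N)%N -> low m (f k - h k)) ->
  low m (\prod_(0 <= k < N) f k - \prod_(0 <= k < N) h k).
Proof.
elim: N => [|N IH] H; first by rewrite !big_geq // subrr; exact: low0'.
rewrite !big_nat_recr //= id5. apply: low_add.
  apply: low_mulr. apply: IH => k hk. apply: H. exact: ltnW.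
apply: low_mull. exact: H.
Qed.

Lemma prod_pair (h : nat -> {poly 'F_2}) n :
  \prod_(0 <= k < 2 * n) h k.+1 = \prod_(0 <= m < n) (h (2 * m).+1 * h (2 * m).+2).
Proof.
elim: n => [|n IH]; first by rewrite !big_geq.
rewrite (_ : (2 * n.+1 = (2 * n).+2)%N); last by lia.
rewrite [in LHS]big_nat_recr // [in LHS]big_nat_recr // [in RHS]big_nat_recr //= IH mulrA.
by [].
Qed.

Lemma sum_odd j : (\sum_(0 <= m < j) (2 * m).+1 = j * j)%N.
Proof.
elim: j => [|j IH]; first by rewrite big_geq.
rewrite big_nat_recr //= IH. lia.
Qed.

Lemma sq_c2 (y : {poly 'F_2}) : (1 - y) ^+ 2 = 1 - y ^+ 2.
Proof.
have -> : (1 - y) ^+ 2 = 1 - y ^+ 2 + 2%:R * (y * y - y) by ring.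
by rewrite two_poly mul0r addr0.
Qed.

Lemma prod_g n j : (j <= n)%N ->
  \prod_(0 <= k < 2 * n) g j k.+1 = X2 ^+ (j * j) * Pg X2 1 j * (Pg X2 j.+1 (n - j)) ^+ 2.
Proof.
move=> hj.
rewrite /g big_split big_split /=.
have hA : \prod_(0 <= k < 2 * n) gA j k.+1 = X2 ^+ (j * j).
  rewrite prod_pair.
  rewrite (eq_big_nat _ _ (F2 := fun m => if (m < j)%N then X2 ^+ (2 * m).+1 else 1)); last first.
    move=> m _. rewrite /gA /=. have -> : odd (2 * m) = false by rewrite oddM.
    rewrite /= mulr1. have -> : ((2 * m).+1 <= 2 * j - 1)%N = (m < j)%N by lia. by [].
  rewrite (@big_cat_nat _ _ _ j) //= [X in _ * X]big1_seq ?mulr1; last first.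
    by move=> m /andP[_]; rewrite mem_index_iota => /andP[h _]; rewrite ltnNge h.
  rewrite -sum_odd -prodrXr. apply: eq_big_nat => m /andP[_ hm]. by rewrite hm.
have hB : \prod_(0 <= k < 2 * n) gB j k.+1 = Pg X2 1 j.
  rewrite (@big_cat_nat _ _ _ j) //=; last by lia.
  rewrite [X in _ * X]big1_seq ?mulr1; last first.
    by move=> k /andP[_]; rewrite mem_index_iota => /andP[h _]; rewrite /gB ltnNge h.
  apply: eq_big_nat => k /andP[_ hk]. by rewrite /gB hk add1n.
have hC : \prod_(0 <= k < 2 * n) gC j k.+1 = (Pg X2 j.+1 (n - j)) ^+ 2.
  rewrite prod_pair.
  rewrite (eq_big_nat _ _ (F2 := fun m => if (j <= m)%N then 1 - X2 ^+ (2 * m).+2 else 1)); last first.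
    move=> m _. rewrite /gC /=. have -> : odd (2 * m) = false by rewrite oddM.
    rewrite /= mul1r. have -> : (2 * j < (2 * m).+2)%N = (j <= m)%N by lia. by [].
  rewrite (@big_cat_nat _ _ _ j) //= big1_seq ?mul1r; last first.
    by move=> m /andP[_]; rewrite mem_index_iota => /andP[_ h]; rewrite leqNgt h.
  rewrite /Pg -prodrXl -{1}[j]add0n big_addn.
  apply: eq_big_nat => i /andP[_ hi]. rewrite leq_addl sq_c2 -exprM.
  by congr (1 - X2 ^+ _); lia.
by rewrite hA hB hC.
Qed.


Lemma c8_main n : (2 <= n)%N -> ((c8 n)%:R : 'F_2) =
  (Pg X2 1 n * \sum_(0 <= j < n.+1) X2 ^+ (j * j) * Pg X2 j.+1 (n - j))`_n.
Proof.
move=> hn. rewrite c8_sum.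
transitivity (\sum_(j < n.+1) (\prod_(0 <= k < 2 * n) g j k.+1)`_n).
  apply: eq_bigr => j _. apply: lowP. apply: low_prod => k hk. exact: FP_g.
have E : \sum_(j < n.+1) \prod_(0 <= k < 2 * n) g j k.+1 =
    Pg X2 1 n * \sum_(0 <= j < n.+1) X2 ^+ (j * j) * Pg X2 j.+1 (n - j).
  rewrite mulr_sumr big_mkord. apply: eq_bigr => j _.
  have hj : (j <= n)%N by rewrite -ltnS ltn_ord.
  rewrite prod_g //.
  have -> : Pg X2 1 n = Pg X2 1 j * Pg X2 j.+1 (n - j) by rewrite -{1}(subnKC hj) PgD add1n.
  ring.
by rewrite -coef_sum E.
Qed.

Local Close Scope ring_scope.

Theorem theorem9 (n r : nat) :
  r \in [:: 6; 20; 27; 34; 41; 48] -> c8 (49 * n + r) %% 2 = 0.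
Proof.
move=> hr.
have hr' : r = 6 \/ r = 20 \/ r = 27 \/ r = 34 \/ r = 41 \/ r = 48.
  move: hr; rewrite !inE.
  case/orP => [/eqP->|]; first by lia.
  case/orP => [/eqP->|]; first by lia.
  case/orP => [/eqP->|]; first by lia.
  case/orP => [/eqP->|]; first by lia.
  case/orP => [/eqP->|]; first by lia.
  move/eqP->; by lia.
set N := 49 * n + r.
have hN : N %% 49 \in [:: 6; 20; 27; 34; 41; 48].
  have -> : N %% 49 = r by rewrite /N; lia. exact: hr.
have h2 : 2 <= N by rewrite /N; lia.
have h := c8_main h2. rewrite main_alg // in h.
have := @Fp_nat_mod 2 isT (c8 N). rewrite h.
have : c8 N %% 2 < 2 by rewrite ltn_mod.
case: (c8 N %% 2) => [|[|m]] //= _.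
Qed.
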